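(* Let $J$ be an ideal of $\widetilde{\mathbb{K}}_{sm}$ and $x\in J$. Then $|x|\in J$.
   Context: Let $I=(0,1]$ and $\mathbb{K}\in\{\mathbb{R},\mathbb{C}\}$. $\widetilde{\mathbb{K}}_{sm}=\mathcal{E}_{M,sm}/\mathcal{N}_{sm}$ where $\mathcal{E}_{M,sm}$ is the set of nets $(r_\varepsilon)_{\varepsilon\in I}\in\mathbb{K}^I$ smooth in $\varepsilon$ with $|r_\varepsilon|=O(\varepsilon^{-N})$ for some $N$, and $\mathcal{N}_{sm}$ those with $|r_\varepsilon|=O(\varepsilon^m)$ for all $m$; $\widetilde{\mathbb{K}}_{co}$ is defined analogously with continuous nets, and $\tau_{sm}:\widetilde{\mathbb{K}}_{sm}\to\widetilde{\mathbb{K}}_{co}$, $[(r_\varepsilon)]\mapsto[(r_\varepsilon)]$, is a ring isomorphism. For $x=[(x_\varepsilon)_\varepsilon]\in\widetilde{\mathbb{K}}_{sm}$, $|x|:=\tau_{sm}^{-1}([(|x_\varepsilon|)_\varepsilon])$. *)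

(* Defs.v *)
From Stdlib Require Import Reals.
From Coquelicot Require Import Coquelicot.
Open Scope R_scope.

(* A net (r_eps)_{eps in I}, I = (0,1], with values in K.  Both K = R and K = C are
   handled uniformly: values are taken in C, and when [isR = true] (K = R) the net is
   required to be real-valued on I.  Values outside I are irrelevant. *)
Definition net := R -> C.

Definition inI (e : R) : Prop := 0 < e <= 1.

Definition inK (isR : bool) (z : C) : Prop := isR = true -> Im z = 0.

Definition smooth_on_I (f : R -> R) : Prop :=
  exists (g : R -> R) (d : R), 0 < d /\
    (forall e, inI e -> g e = f e) /\
    (forall (n : nat) (x : R), 0 < x < 1 + d -> ex_derive_n g n x).

Definition smooth_net (isR : bool) (r : net) : Prop :=
  (forall e, inI e -> inK isR (r e)) /\
  smooth_on_I (fun e => Re (r e)) /\ smooth_on_I (fun e => Im (r e)).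

Definition moderate (r : net) : Prop :=
  exists (N : nat) (c eta : R), 0 < eta <= 1 /\
    forall e, 0 < e <= eta -> Cmod (r e) <= c * / (e ^ N).

Definition negligible (r : net) : Prop :=
  forall m : nat, exists (c eta : R), 0 < eta <= 1 /\
    forall e, 0 < e <= eta -> Cmod (r e) <= c * e ^ m.

Definition EMsm (isR : bool) (r : net) : Prop := smooth_net isR r /\ moderate r.

Definition Nsm (isR : bool) (r : net) : Prop := EMsm isR r /\ negligible r.

Definition net0 : net := fun _ => RtoC 0.
Definition net_add (r s : net) : net := fun e => Cplus (r e) (s e).
Definition net_opp (r : net) : net := fun e => Copp (r e).
Definition net_mul (r s : net) : net := fun e => Cmult (r e) (s e).
Definition net_sub (r s : net) : net := fun e => Cminus (r e) (s e).

(* Two representatives define the same element of K~_sm = E_{M,sm}/N_sm. *)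
Definition sm_equiv (isR : bool) (r s : net) : Prop :=
  EMsm isR r /\ EMsm isR s /\ negligible (net_sub r s).

(* A subset of K~_sm is represented by the set of all representatives of its
   elements, i.e. a subset of E_{M,sm} saturated w.r.t. N_sm. *)
Record is_ideal_Ksm (isR : bool) (J : net -> Prop) : Prop := {
  ideal_repr : forall r, J r -> EMsm isR r;
  ideal_sat  : forall r s, J r -> sm_equiv isR r s -> J s;
  ideal_0    : J net0;
  ideal_add  : forall r s, J r -> J s -> J (net_add r s);
  ideal_opp  : forall r, J r -> J (net_opp r);
  ideal_mul  : forall a r, EMsm isR a -> J r -> J (net_mul a r)
}.

(* s is a representative of |x| := tau_sm^{-1}([(|x_eps|)_eps]) : s is a smooth
   moderate net whose class in K~_co equals that of the continuous net (|x_eps|). *)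
Definition repr_abs (isR : bool) (x s : net) : Prop :=
  EMsm isR s /\ negligible (fun e => Cminus (s e) (RtoC (Cmod (x e)))).

(* Main.v *)
Require Import Defs.
From Stdlib Require Import Reals Lra Lia.
From Coquelicot Require Import Coquelicot.

Fixpoint Cn (U : R -> Prop) (n : nat) (f : R -> R) : Prop :=
  match n with
  | O => True
  | S n => (forall x, U x -> ex_derive f x) /\ Cn U n (Derive f)
  end.

Lemma Cn_weak U n : forall f, Cn U (S n) f -> Cn U n f.
Proof.
induction n as [|n IH]; intros f H; simpl in *; auto.
destruct H as [H1 H2]. split; auto.
Qed.

Lemma Cn_ext U (HU : open U) n : forall f g,
  (forall x, U x -> f x = g x) -> Cn U n f -> Cn U n g.
Proof.
induction n as [|n IH]; intros f g Hfg Hf; simpl in *; auto.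
destruct Hf as [H1 H2]. split.
- intros x Hx. apply (ex_derive_ext_loc f g); [|now apply H1].
  apply (filter_imp U); [exact Hfg| exact (HU x Hx)].
- apply (IH (Derive f)); auto. intros x Hx. apply Derive_ext_loc.
  apply (filter_imp U); [exact Hfg| exact (HU x Hx)].
Qed.


Section S.
Variable U : R -> Prop.
Hypothesis HU : open U.

Lemma Cn_const n : forall c, Cn U n (fun _ => c).
Proof.
induction n as [|n IH]; intros c; simpl; auto.
split.
- intros; apply ex_derive_const.
- apply (Cn_ext U HU n (fun _ => 0)); auto.
  intros x _. symmetry. exact (Derive_const c x).
Qed.

Lemma Cn_plus n : forall f g, Cn U n f -> Cn U n g -> Cn U n (fun x => f x + g x).
Proof.
induction n as [|n IH]; intros f g Hf Hg; simpl in *; auto.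
destruct Hf as [F1 F2], Hg as [G1 G2]. split.
- intros x Hx. exact (ex_derive_plus f g x (F1 x Hx) (G1 x Hx)).
- apply (Cn_ext U HU n (fun x => Derive f x + Derive g x)); auto.
  intros x Hx. symmetry. apply Derive_plus; auto.
Qed.

Lemma Cn_opp n : forall f, Cn U n f -> Cn U n (fun x => - f x).
Proof.
induction n as [|n IH]; intros f Hf; simpl in *; auto.
destruct Hf as [F1 F2]. split.
- intros x Hx. exact (ex_derive_opp f x (F1 x Hx)).
- apply (Cn_ext U HU n (fun x => - Derive f x)); auto.
  intros x Hx. symmetry. apply Derive_opp.
Qed.

Lemma Cn_mult n : forall f g, Cn U n f -> Cn U n g -> Cn U n (fun x => f x * g x).
Proof.
induction n as [|n IH]; intros f g Hf Hg; simpl in *; auto.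
assert (Hf' : Cn U n f) by (apply Cn_weak; exact Hf).
assert (Hg' : Cn U n g) by (apply Cn_weak; exact Hg).
destruct Hf as [F1 F2], Hg as [G1 G2]. split.
- intros x Hx. exact (ex_derive_mult f g x (F1 x Hx) (G1 x Hx)).
- apply (Cn_ext U HU n (fun x => Derive f x * g x + f x * Derive g x)); auto.
  + intros x Hx. symmetry. apply Derive_mult; auto.
  + apply Cn_plus; apply IH; auto.
Qed.

Lemma Cn_inv n : forall f, Cn U n f -> (forall x, U x -> f x <> 0) ->
  Cn U n (fun x => / f x).
Proof.
induction n as [|n IH]; intros f Hf Hnz; simpl in *; auto.
assert (Hf' : Cn U n f) by (apply Cn_weak; exact Hf).
destruct Hf as [F1 F2]. split.
- intros x Hx. apply ex_derive_Reals_1.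
  apply derivable_pt_inv; [now apply Hnz|]. apply ex_derive_Reals_0, F1; auto.
- apply (Cn_ext U HU n (fun x => - Derive f x * (/ f x * / f x))); auto.
  + intros x Hx. symmetry. apply is_derive_unique.
    destruct (F1 x Hx) as [l Hl].
    pose proof (is_derive_inv f x l Hl (Hnz x Hx)) as H.
    rewrite (is_derive_unique _ _ _ Hl).
    replace (- l * (/ f x * / f x)) with (- l / f x ^ 2); auto.
    field. apply Hnz; auto.
  + apply Cn_mult; [apply Cn_opp; auto|]. apply Cn_mult; apply IH; auto.
Qed.

End S.

Lemma Cn_comp (V U : R -> Prop) (HV : open V) (HU : open U) n : forall g f,
  Cn V n g -> Cn U n f -> (forall x, U x -> V (f x)) -> Cn U n (fun x => g (f x)).
Proof.
induction n as [|n IH]; intros g f Hg Hf Hm; simpl in *; auto.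
assert (Hf' : Cn U n f) by (apply Cn_weak; exact Hf).
destruct Hf as [F1 F2], Hg as [G1 G2]. split.
- intros x Hx. exact (ex_derive_comp g f x (G1 _ (Hm x Hx)) (F1 x Hx)).
- apply (Cn_ext U HU n (fun x => Derive g (f x) * Derive f x)); auto.
  + intros x Hx. symmetry. rewrite Rmult_comm. apply Derive_comp; auto.
  + apply Cn_mult; auto.
Qed.

Lemma Cn_exp n : Cn (fun _ => True) n exp.
Proof.
induction n as [|n IH]; simpl; auto. split.
- intros x _. eexists; apply is_derive_exp.
- apply (Cn_ext _ open_true n exp); auto.
  intros x _. symmetry. apply is_derive_unique, is_derive_exp.
Qed.

Lemma Cn_id U (HU : open U) n : Cn U n (fun x => x).
Proof.
destruct n as [|n]; simpl; auto. split.
- intros x _. apply ex_derive_id.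
- apply (Cn_ext U HU n (fun _ => 1)). 2: apply Cn_const; auto.
  intros x _. symmetry. apply Derive_id.
Qed.

Lemma open_pos : open (fun x : R => 0 < x).
Proof. apply open_gt. Qed.

Lemma Cn_sqrt n : Cn (fun x => 0 < x) n sqrt.
Proof.
induction n as [|n IH]; simpl; auto. split.
- intros x Hx. eexists. apply (is_derive_sqrt (fun t => t) x 1); auto.
  apply (@is_derive_id R_AbsRing).
- apply (Cn_ext _ open_pos n (fun x => / (2 * sqrt x))).
  + intros x Hx. symmetry. apply is_derive_unique.
    replace (/ (2 * sqrt x)) with (1 / (2 * sqrt (id x))) by (unfold id; field; apply Rgt_not_eq, sqrt_lt_R0; auto).
    apply (is_derive_sqrt (fun t => t) x 1); auto. apply (@is_derive_id R_AbsRing).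
  + apply Cn_inv. apply open_pos. 2: intros x Hx; apply Rgt_not_eq, Rmult_lt_0_compat; [lra| apply sqrt_lt_R0; auto].
    apply Cn_mult. apply open_pos. apply Cn_const, open_pos. exact IH.
Qed.

Lemma Derive_n_S f k x : Derive_n (Derive f) k x = Derive_n f (S k) x.
Proof.
revert x; induction k as [|k IH]; intros x; simpl; auto.
apply Derive_ext. intros t. apply IH.
Qed.

Lemma Cn_of_exn U n : forall f, (forall k x, U x -> ex_derive_n f k x) -> Cn U n f.
Proof.
induction n as [|n IH]; intros f H; simpl; auto. split.
- intros x Hx. exact (H 1%nat x Hx).
- apply IH. intros [|k] x Hx; simpl; auto.
  apply (ex_derive_ext (Derive_n f (S k))).
  + intros t. symmetry. apply Derive_n_S.
  + exact (H (S (S k)) x Hx).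
Qed.

Lemma exn_of_Cn U k : forall f x, Cn U (S k) f -> U x -> ex_derive_n f (S k) x.
Proof.
induction k as [|k IH]; intros f x Hf Hx.
- simpl in *. apply Hf; auto.
- simpl. destruct Hf as [_ Hf].
  apply (ex_derive_ext (Derive_n (Derive f) k)).
  + intros t. apply Derive_n_S.
  + exact (IH (Derive f) x Hf Hx).
Qed.

Lemma exp_mul_nat k z : exp (INR k * z) = exp z ^ k.
Proof.
induction k as [|k IH].
- simpl. rewrite Rmult_0_l, exp_0; auto.
- rewrite S_INR, Rmult_plus_distr_r, Rmult_1_l, exp_plus, IH. simpl. ring.
Qed.

Lemma exp_negl m : exists c, forall e, 0 < e <= 1 -> exp (- / e) <= c * e ^ m.
Proof.
exists (INR (S m) ^ (S m)). intros e He.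
set (k := INR (S m)).
assert (Hk : 0 < k) by (apply lt_0_INR; lia).
assert (Hz : 0 < / e / k) by (apply Rdiv_lt_0_compat; [apply Rinv_0_lt_compat|]; lra).
assert (H1 : exp (/ e) = exp (/ e / k) ^ S m).
{ rewrite <- exp_mul_nat. f_equal. fold k. field. split; lra. }
assert (H2 : / e / k <= exp (/ e / k)).
{ pose proof (exp_ineq1 (/ e / k)). lra. }
assert (H3 : (/ e / k) ^ S m <= exp (/ e)).
{ rewrite H1. apply pow_incr. lra. }
rewrite exp_Ropp.
assert (Hpos : 0 < (/ e / k) ^ S m) by (apply pow_lt; lra).
assert (Hem : e ^ S m <= e ^ m).
{ simpl. rewrite <- (Rmult_1_l (e ^ m)) at 2. apply Rmult_le_compat_r; [apply pow_le|]; lra. }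
apply Rle_trans with (/ ((/ e / k) ^ S m)).
- apply Rinv_le_contravar; auto.
- rewrite <- pow_inv. 
  replace (/ (/ e / k)) with (k * e) by (field; split; lra).
  rewrite Rpow_mult_distr. apply Rmult_le_compat_l; auto.
  apply pow_le; lra.
Qed.
Open Scope R_scope.

Lemma negl_le (f g h : net) : negligible f -> negligible g ->
  (forall e, 0 < e <= 1 -> Cmod (h e) <= Cmod (f e) + Cmod (g e)) -> negligible h.
Proof.
intros Hf Hg H m. destruct (Hf m) as [c1 [eta1 [He1 H1]]].
destruct (Hg m) as [c2 [eta2 [He2 H2]]].
exists (c1 + c2), (Rmin eta1 eta2). split.
- split; [apply Rmin_glb_lt; lra| pose proof (Rmin_l eta1 eta2); lra].
- intros e He. pose proof (Rmin_l eta1 eta2); pose proof (Rmin_r eta1 eta2).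
  eapply Rle_trans; [apply H; lra|].
  rewrite Rmult_plus_distr_r. apply Rplus_le_compat; [apply H1|apply H2]; lra.
Qed.

Lemma key_ineq v w t : 0 <= v -> 0 < w -> 0 <= t -> w * w = v * v + t * t ->
  Rabs (v * v / w - v) <= t.
Proof.
intros Hv Hw Ht Heq.
assert (Hwv : v <= w) by nra.
assert (Hwt : w <= v + t) by nra.
apply Rabs_le. split.
- apply (Rmult_le_reg_r w); auto. unfold Rdiv.
  replace ((v * v * / w - v) * w) with (v * v - v * w) by (field; lra). nra.
- apply (Rmult_le_reg_r w); auto. unfold Rdiv.
  replace ((v * v * / w - v) * w) with (v * v - v * w) by (field; lra). nra.
Qed.

Definition Rx (x : net) (e : R) : R :=
  sqrt (fst (x e) * fst (x e) + snd (x e) * snd (x e) + exp (- (2 * / e))).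

Definition anet (x : net) : net := fun e =>
  (fst (x e) * / Rx x e, - (snd (x e) * / Rx x e)).

Lemma Rx_pos x e : 0 < Rx x e.
Proof.
unfold Rx. apply sqrt_lt_R0. pose proof (exp_pos (- (2 * / e))). nra.
Qed.

Lemma anet_smooth isR x : smooth_net isR x -> smooth_net isR (anet x).
Proof.
intros [HK [[g1 [d1 [Hd1 [E1 D1]]]] [g2 [d2 [Hd2 [E2 D2]]]]]].
pose proof (Rmin_l d1 d2). pose proof (Rmin_r d1 d2).
assert (Hd : 0 < Rmin d1 d2) by (apply Rmin_glb_lt; auto).
set (d := Rmin d1 d2) in *.
set (U := fun t => 0 < t /\ t < 1 + d).
assert (HU : open U) by (apply open_and; [apply open_gt|apply open_lt]).
assert (C1 : forall n, Cn U n g1).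
{ intros n. apply Cn_of_exn. intros k t [Ht1 Ht2]. apply D1. lra. }
assert (C2 : forall n, Cn U n g2).
{ intros n. apply Cn_of_exn. intros k t [Ht1 Ht2]. apply D2. lra. }
set (Rg := fun t => sqrt (g1 t * g1 t + g2 t * g2 t + exp (- (2 * / t)))).
assert (CR : forall n, Cn U n (fun t => / Rg t)).
{ intros n. apply Cn_inv; auto.
  - unfold Rg. apply (Cn_comp (fun y => 0 < y) U open_pos HU n sqrt); auto.
    + apply Cn_sqrt.
    + apply Cn_plus; auto. apply Cn_plus; auto; apply Cn_mult; auto.
      apply (Cn_comp (fun _ => True) U open_true HU n exp); auto.
      * apply Cn_exp.
      * apply Cn_opp; auto. apply Cn_mult; auto. apply Cn_const; auto.
        apply Cn_inv; auto. apply Cn_id; auto. intros t [Ht _]; lra.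
    + intros t _. pose proof (exp_pos (- (2 * / t))). nra.
  - intros t _. unfold Rg. apply Rgt_not_eq, sqrt_lt_R0.
    pose proof (exp_pos (- (2 * / t))). nra. }
assert (Heq : forall e, inI e -> Rg e = Rx x e).
{ intros e He. unfold Rg, Rx. rewrite E1, E2; auto. }
split; [|split].
- intros e He Hr. specialize (HK e He Hr). unfold anet; simpl.
  change (snd (x e)) with (Im (x e)). rewrite HK. field. apply Rgt_not_eq, Rx_pos.
- exists (fun t => g1 t * / Rg t), d. split; auto. split.
  + intros e He. unfold anet; simpl. rewrite Heq, E1; auto.
  + intros n t Ht. destruct n as [|n]; [simpl; auto|].
    apply (exn_of_Cn U); [|exact Ht]. apply Cn_mult; auto.
- exists (fun t => - (g2 t * / Rg t)), d. split; auto. split.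
  + intros e He. unfold anet; simpl. rewrite Heq, E2; auto.
  + intros n t Ht. destruct n as [|n]; [simpl; auto|].
    apply (exn_of_Cn U); [|exact Ht]. apply Cn_opp; auto. apply Cn_mult; auto.
Qed.

Theorem lemma4p24 (isR : bool) (J : net -> Prop) (HJ : is_ideal_Ksm isR J)
  (x : net) (Hx : J x) :
  forall s : net, repr_abs isR x s -> J s.
Proof.
intros s [Hs Hns].
assert (HxE : EMsm isR x) by (apply (ideal_repr _ _ HJ); auto).
assert (HaE : EMsm isR (anet x)).
{ split. apply anet_smooth, HxE.
  exists 0%nat, 1, 1. split; [lra|]. intros e He. simpl. rewrite Rinv_1, Rmult_1_r.
  unfold Cmod, anet; simpl. apply Rle_trans with (sqrt 1); [apply sqrt_le_1_alt|rewrite sqrt_1; lra].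
  pose proof (Rx_pos x e) as Hp.
  assert (Hsq : Rx x e * Rx x e = fst (x e) * fst (x e) + snd (x e) * snd (x e) + exp (- (2 * / e))).
  { unfold Rx. apply sqrt_sqrt. pose proof (exp_pos (- (2 * / e))). nra. }
  pose proof (exp_pos (- (2 * / e))).
  replace ((fst (x e) * / Rx x e) * ((fst (x e) * / Rx x e) * 1) +
    (- (snd (x e) * / Rx x e)) * ((- (snd (x e) * / Rx x e)) * 1))
    with ((fst (x e) * fst (x e) + snd (x e) * snd (x e)) / (Rx x e * Rx x e))
    by (field; lra).
  rewrite Hsq. apply Rcomplements.Rle_div_l; nra. }
assert (HJa : J (net_mul (anet x) x)) by (apply (ideal_mul _ _ HJ); auto).
apply (ideal_sat _ _ HJ (net_mul (anet x) x)); auto.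
split; [apply (ideal_repr _ _ HJ); auto|]. split; auto.
apply (negl_le (fun e => RtoC (exp (- / e))) (fun e => Cminus (s e) (RtoC (Cmod (x e))))); auto.
- intros m. destruct (exp_negl m) as [c Hc]. exists c, 1. split; [lra|].
  intros e He. rewrite Cmod_R, Rabs_pos_eq by (apply Rlt_le, exp_pos). apply Hc; auto.
- intros e He. unfold net_sub.
  set (v := Cmod (x e)).
  set (w := Rx x e).
  set (t := exp (- / e)).
  assert (Hv : 0 <= v) by apply Cmod_ge_0.
  assert (Hw : 0 < w) by apply Rx_pos.
  assert (Ht : 0 < t) by apply exp_pos.
  assert (Hvv : v * v = fst (x e) * fst (x e) + snd (x e) * snd (x e)).
  { unfold v, Cmod. rewrite sqrt_sqrt; [ring|]. nra. }
  assert (Htt : t * t = exp (- (2 * / e))).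
  { unfold t. rewrite <- exp_plus. f_equal. ring. }
  assert (Hww : w * w = v * v + t * t).
  { unfold w, Rx. rewrite sqrt_sqrt. rewrite Hvv, Htt; ring.
    pose proof (exp_pos (- (2 * / e))). nra. }
  assert (Hmul : net_mul (anet x) x e = RtoC (v * v / w)).
  { unfold net_mul, anet, Cmult, RtoC; simpl. fold w. rewrite Hvv.
    f_equal; field; lra. }
  replace (Cminus (net_mul (anet x) x e) (s e)) with
    (Cplus (RtoC (v * v / w - v)) (Copp (Cminus (s e) (RtoC v)))).
  2:{ rewrite Hmul. apply injective_projections; simpl; ring. }
  eapply Rle_trans; [apply Cmod_triangle|]. rewrite Cmod_opp.
  apply Rplus_le_compat_r.
  rewrite !Cmod_R. rewrite (Rabs_pos_eq t) by lra. apply key_ineq; auto; lra.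
Qed.
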